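(* Let $n\ge 2$, let $\mathcal{S}\subseteq(\mathbb{C}^d)^{\otimes n}$ be the permutation-symmetric subspace, let $|\psi\rangle\in\mathcal{S}$ and let $X$ be a $d\times d$ complex matrix with $X_{(1)}|\psi\rangle\in\mathcal{S}$. Then $X^p_{(1)}|\psi\rangle\in\mathcal{S}$ for every natural number $p\ge 0$; if moreover $X$ is invertible, this holds for every integer $p$.
   Context: $\mathcal{S}$ is the set of vectors in $(\mathbb{C}^d)^{\otimes n}$ invariant under all permutations of the $n$ tensor factors. For a $d\times d$ matrix $X$, $X^p_{(1)}$ denotes the operator $X^p\otimes\mathbb{I}\otimes\cdots\otimes\mathbb{I}$ on $(\mathbb{C}^d)^{\otimes n}$. *)

(* Defs.v *)
From HB Require Import structures.
From mathcomp Require Import all_boot all_order all_algebra all_fingroup.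
From mathcomp Require Import reals.
From mathcomp.real_closed Require Import complex.
Set Implicit Arguments. Unset Strict Implicit. Unset Printing Implicit Defensive.
Import Order.TTheory GRing.Theory Num.Theory.
Local Open Scope ring_scope.

(* Vectors of (K^d)^{\otimes n} in coordinates: a vector is a function from
   multi-indices (i_1,...,i_n), encoded as {ffun 'I_n -> 'I_d}, to K. *)
Definition tensor (K : Type) (n d : nat) := {ffun 'I_n -> 'I_d} -> K.

Definition in_sym (K : Type) (n d : nat) (psi : tensor K n d) : Prop :=
  forall (s : 'S_n) (i : {ffun 'I_n -> 'I_d}), psi [ffun k => i (s k)] = psi i.

(* X acting on the k-th tensor factor: X_(k) = I ⊗ ... ⊗ X ⊗ ... ⊗ I. *)
Definition op_at (K : nzRingType) (n d : nat) (k : 'I_n) (X : 'M[K]_d)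
  (psi : tensor K n d) : tensor K n d :=
  fun i => \sum_(j < d) X (i k) j * psi [ffun l => if l == k then j else i l].

Definition first_factor (n : nat) (hn : (0 < n)%N) : 'I_n := Ordinal hn.

Definition mxpowz (K : comUnitRingType) (d : nat) (X : 'M[K]_d) (p : int) : 'M[K]_d :=
  match p with
  | Posz k => X ^+ k
  | Negz k => (invmx X) ^+ k.+1
  end.

(* Main.v *)
Require Import Defs.
From HB Require Import structures.
From mathcomp Require Import all_boot all_order all_algebra all_fingroup.
From mathcomp Require Import reals.
From mathcomp.real_closed Require Import complex.
From Stdlib Require Import FunctionalExtensionality.
Import Order.TTheory GRing.Theory Num.Theory.
Local Open Scope ring_scope.

Section Aux.
Variables (K : comUnitRingType) (n d : nat).
Implicit Types (psi : tensor K n d) (A B : 'M[K]_d).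

Definition upd (i : {ffun 'I_n -> 'I_d}) (k : 'I_n) (j : 'I_d) :
  {ffun 'I_n -> 'I_d} := [ffun l => if l == k then j else i l].

Lemma upd_same i k j j' : upd (upd i k j) k j' = upd i k j'.
Proof. by apply/ffunP => l; rewrite !ffunE; case: (l == k). Qed.

Lemma upd_at i k j : upd i k j k = j.
Proof. by rewrite ffunE eqxx. Qed.

Lemma upd_other i k l j : l != k -> upd i k j l = i l.
Proof. by move=> h; rewrite ffunE (negbTE h). Qed.

Lemma upd_comm i k l j m : k != l -> upd (upd i k j) l m = upd (upd i l m) k j.
Proof.
move=> h; apply/ffunP => x; rewrite !ffunE.
case: (eqVneq x l) => [exl|hxl]; case: (eqVneq x k) => [exk|hxk] //.
by move: h; rewrite -exk -exl eqxx.
Qed.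

Lemma upd_id i k : upd i k (i k) = i.
Proof. by apply/ffunP => l; rewrite !ffunE; case: eqP => // ->. Qed.

Lemma op_atE k A psi i :
  op_at k A psi i = \sum_(j < d) A (i k) j * psi (upd i k j).
Proof. by []. Qed.

Lemma op_at_mul k A B psi :
  op_at k (A * B) psi = op_at k A (op_at k B psi).
Proof.
apply: functional_extensionality => i; rewrite !op_atE.
under [RHS]eq_bigr => j _ do rewrite op_atE upd_at mulr_sumr.
rewrite [RHS]exchange_big /=; apply: eq_bigr => l _.
rewrite -mulmxE mxE mulr_suml; apply: eq_bigr => j _.
by rewrite upd_same mulrA.
Qed.

Lemma op_at_1 k psi : op_at k 1 psi = psi.
Proof.
apply: functional_extensionality => i; rewrite op_atE.
rewrite (bigD1 (i k)) //= big1 ?addr0.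
  by rewrite mxE eqxx mul1r upd_id.
by move=> j hj; rewrite mxE eq_sym (negbTE hj) mul0r.
Qed.

Lemma op_at_comm k l A B psi : k != l ->
  op_at k A (op_at l B psi) = op_at l B (op_at k A psi).
Proof.
move=> hkl; apply: functional_extensionality => i; rewrite !op_atE.
under eq_bigr => j _ do rewrite op_atE upd_other 1?eq_sym // mulr_sumr.
under [RHS]eq_bigr => j _ do rewrite op_atE upd_other // mulr_sumr.
rewrite exchange_big /=; apply: eq_bigr => m _; apply: eq_bigr => j _.
by rewrite upd_comm // !mulrA [A _ _ * _]mulrC.
Qed.

Definition pact (s : 'S_n) psi : tensor K n d := fun i => psi [ffun k => i (s k)].

Lemma pact_op s k A psi :
  pact s (op_at k A psi) = op_at (s k) A (pact s psi).
Proof.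
apply: functional_extensionality => i; rewrite /pact !op_atE ffunE.
apply: eq_bigr => j _; congr (_ * psi _).
apply/ffunP => x; rewrite !ffunE (inj_eq perm_inj).
by case: (x == k).
Qed.

Lemma in_symE psi : in_sym psi <-> forall s, pact s psi = psi.
Proof.
split=> [h s|h s i]; first by apply: functional_extensionality => i; exact: h.
by have := h s; move/(f_equal (fun f => f i)).
Qed.

Definition Hyp k0 A psi := forall k, op_at k A psi = op_at k0 A psi.

Lemma Hyp_of k0 A psi : in_sym psi -> in_sym (op_at k0 A psi) -> Hyp k0 A psi.
Proof.
move=> /in_symE h1 /in_symE h2 k.
have := h2 (tperm k0 k); rewrite pact_op h1 tpermL => ->. done.
Qed.

Lemma sym_of k0 A psi : in_sym psi -> Hyp k0 A psi -> in_sym (op_at k0 A psi).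
Proof.
move=> /in_symE h1 h2; apply/in_symE => s.
by rewrite pact_op h1 h2.
Qed.

Lemma Hyp_exp k0 A psi : Hyp k0 A psi -> forall p, Hyp k0 (A ^+ p) psi.
Proof.
move=> h; elim=> [|p IH] k; first by rewrite !expr0 !op_at_1.
case: (eqVneq k k0) => [->//|hk].
rewrite exprSr op_at_mul h op_at_comm // IH -op_at_mul -exprS.
by rewrite -exprSr.
Qed.

Lemma Hyp_inv k0 A psi : A \in unitmx -> Hyp k0 A psi -> Hyp k0 (invmx A) psi.
Proof.
move=> hA h k.
case: (eqVneq k k0) => [->//|hk].
have e : psi = op_at k0 (invmx A) (op_at k0 A psi).
  by rewrite -op_at_mul -mulmxE mulVmx // op_at_1.
have hk' : k0 != k by rewrite eq_sym.
rewrite {1}e -(h k) (op_at_comm _ _ _ _ _ hk').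
rewrite -op_at_mul -mulmxE mulVmx //.
have -> : (1%:M : 'M[K]_d) = 1 by [].
by rewrite op_at_1.
Qed.

End Aux.
Arguments Hyp_of {K n d k0 A psi}.
Arguments sym_of {K n d k0 A psi}.
Arguments Hyp_exp {K n d k0 A psi}.
Arguments Hyp_inv {K n d k0 A psi}.

Theorem lemma4 (R : realType) (n d : nat) (hn : (2 <= n)%N)
  (psi : tensor R[i] n d) (X : 'M[R[i]]_d) :
  in_sym psi ->
  in_sym (op_at (first_factor (ltnW hn)) X psi) ->
  (forall p : nat, in_sym (op_at (first_factor (ltnW hn)) (X ^+ p) psi)) /\
  (X \in unitmx ->
     forall p : int, in_sym (op_at (first_factor (ltnW hn)) (mxpowz X p) psi)).
Proof.
move=> h1 h2.
set k0 := first_factor (ltnW hn).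
have H : @Hyp R[i] n d k0 X psi := Hyp_of h1 h2.
split=> [p|hX [p|p]] /=.
- exact: (sym_of h1 (Hyp_exp H p)).
- exact: (sym_of h1 (Hyp_exp H p)).
- exact: (sym_of h1 (Hyp_exp (Hyp_inv hX H) p.+1)).
Qed.
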